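(* Let $f:\mathbb{R}^n\to\mathbb{R}$ be continuously differentiable and let $g$ be the harmonic extension of $f|_{\{-1,1\}^n}$ to $[-1,1]^n$, i.e. $g(y)=\int f\,d\mu_y$ for $y\in[-1,1]^n$, where $\mu_y$ is the product probability measure on $\{-1,1\}^n$ with mean $y$. Then $$\sup_{y\in[-1,1]^n}\big(f(y)-g(y)\big)\le\kappa\, b(V),$$ where $\kappa$ is a numerical constant and $V=\nabla f([-1,1]^n)$.
   Context: $b(V)=\mathbb{E}\sup_{\xi\in V}\langle\xi,\varepsilon\rangle$ with $\varepsilon$ uniformly distributed on $\{-1,1\}^n$. *)

(* Defs.v *)
From HB Require Import structures.
From mathcomp Require Import all_boot all_order all_algebra.
From mathcomp Require Import all_classical all_reals all_analysis.
From mathcomp Require Import Rstruct Rstruct_topology.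
Set Implicit Arguments. Unset Strict Implicit. Unset Printing Implicit Defensive.
Import Order.TTheory GRing.Theory Num.Theory.
Import numFieldNormedType.Exports.
Local Open Scope ring_scope.
Local Open Scope classical_set_scope.

Notation RR := Rdefinitions.R.

Definition sgnb (b : bool) : RR := if b then 1 else -1.

Definition sign_pt (n : nat) (s : {ffun 'I_n -> bool}) : 'rV[RR]_n :=
  \row_i sgnb (s i).

Definition in_cube (n : nat) (y : 'rV[RR]_n) : Prop :=
  forall i, -1 <= y ord0 i <= 1.

Definition gradient (n : nat) (f : 'rV[RR]_n -> RR) (x : 'rV[RR]_n) : 'rV[RR]_n :=
  \row_(i < n) derive (f : 'rV[RR]_n -> RR^o) x (delta_mx ord0 i : 'rV[RR]_n).

Definition C1 (n : nat) (f : 'rV[RR]_n -> RR) : Prop :=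
  (forall x, differentiable (f : 'rV[RR]_n -> RR^o) x) /\ continuous (gradient f).

(* mu_y({eps}) = prod_i (1 + eps_i y_i)/2 : product probability measure on
   {-1,1}^n with mean y *)
Definition mu_weight (n : nat) (y : 'rV[RR]_n) (s : {ffun 'I_n -> bool}) : RR :=
  \prod_i ((1 + sgnb (s i) * y ord0 i) / 2).

Definition harm_ext (n : nat) (f : 'rV[RR]_n -> RR) (y : 'rV[RR]_n) : RR :=
  \sum_(s : {ffun 'I_n -> bool}) mu_weight y s * f (sign_pt s).

(* b(V) = E sup_{xi in V} <xi, eps>, eps uniform on {-1,1}^n *)
Definition bV (n : nat) (V : set 'rV[RR]_n) : RR :=
  (2 ^+ n)^-1 * \sum_(s : {ffun 'I_n -> bool})
     sup [set (\sum_i xi ord0 i * sgnb (s i)) | xi in V].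

Definition grad_image (n : nat) (f : 'rV[RR]_n -> RR) : set 'rV[RR]_n :=
  gradient f @` [set y | in_cube y].

(* Main.v *)
Require Import Defs.
From HB Require Import structures.
From mathcomp Require Import all_boot all_order all_algebra.
From mathcomp Require Import all_classical all_reals all_analysis.
From mathcomp Require Import Rstruct Rstruct_topology.
From mathcomp Require Import lra.
Import Order.TTheory GRing.Theory Num.Theory.
Import numFieldNormedType.Exports.
Set Implicit Arguments.
Local Open Scope ring_scope.
Local Open Scope classical_set_scope.

Lemma sum_ffun_prod n (F : 'I_n -> bool -> RR) :
  \sum_(s : {ffun 'I_n -> bool}) \prod_i F i (s i) = \prod_i (F i true + F i false).
Proof. by rewrite -bigA_distr_bigA /=; apply: eq_bigr => i _; rewrite big_bool. Qed.

Lemma mw_sum n (w : 'rV[RR]_n) : \sum_s mu_weight w s = 1.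
Proof.
rewrite /mu_weight (@sum_ffun_prod _ (fun i b => (1 + sgnb b * w ord0 i)/2)); apply: big1 => i _ /=; rewrite /sgnb; lra.
Qed.

Lemma mw_ge0 n (w : 'rV[RR]_n) s : (forall i, -1 <= w ord0 i <= 1) -> 0 <= mu_weight w s.
Proof.
move=> hw; rewrite /mu_weight; apply: prodr_ge0 => i _.
have := hw i; rewrite /sgnb; case: (s i) => /andP[h1 h2]; lra.
Qed.

Lemma mw_mean n (w : 'rV[RR]_n) j :
  \sum_s mu_weight w s * sgnb (s j) = w ord0 j.
Proof.
transitivity (\sum_(s : {ffun 'I_n -> bool}) \prod_i
   ((1 + sgnb (s i) * w ord0 i) / 2 * (if i == j then sgnb (s i) else 1))).
  apply: eq_bigr => s _; rewrite /mu_weight [RHS]big_split /=; congr (_ * _).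
  by rewrite -big_mkcond /= big_pred1_eq.
rewrite (@sum_ffun_prod _ (fun i b => (1 + sgnb b * w ord0 i) / 2 * (if i == j then sgnb b else 1))) (bigD1 j) //= eqxx big1 ?mulr1.
  rewrite /sgnb; lra.
move=> i /negPf ->; rewrite /sgnb; lra.
Qed.

Lemma mw_mix n (y : 'rV[RR]_n) sg :
  \sum_s mu_weight y s * mu_weight ((2:RR)^-1 *: (y - sign_pt s)) sg = (2 ^+ n)^-1.
Proof.
transitivity (\sum_(s : {ffun 'I_n -> bool}) \prod_i
   ((1 + sgnb (s i) * y ord0 i) / 2 *
    ((1 + sgnb (sg i) * (2^-1 * (y ord0 i - sgnb (s i)))) / 2))).
  apply: eq_bigr => s _; rewrite /mu_weight -big_split /=.
  by apply: eq_bigr => i _; rewrite !mxE.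
rewrite (@sum_ffun_prod _ (fun i b => (1 + sgnb b * y ord0 i) / 2 *
    ((1 + sgnb (sg i) * (2^-1 * (y ord0 i - sgnb b))) / 2))).
rewrite (eq_bigr (fun _ => 2^-1)); last first.
  by move=> i _; rewrite /sgnb; case: (sg i); lra.
by rewrite prodr_const card_ord exprVn.
Qed.

Lemma step_s n (xi y e : 'rV[RR]_n) (M : {ffun 'I_n -> bool} -> RR) :
  (forall i, -1 <= y ord0 i <= 1) -> (forall i, -1 <= e ord0 i <= 1) ->
  (forall sg : {ffun 'I_n -> bool}, \sum_i xi ord0 i * sgnb (sg i) <= M sg) ->
  \sum_i xi ord0 i * (y ord0 i - e ord0 i) <=
  \sum_(sg : {ffun 'I_n -> bool}) mu_weight ((2:RR)^-1 *: (y - e)) sg * (2 * M sg).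
Proof.
move=> hy he hM.
have -> : \sum_i xi ord0 i * (y ord0 i - e ord0 i) =
   \sum_(sg : {ffun 'I_n -> bool}) mu_weight ((2:RR)^-1 *: (y - e)) sg * (2 * \sum_i xi ord0 i * sgnb (sg i)).
  transitivity (\sum_(sg : {ffun 'I_n -> bool}) \sum_i 2 * xi ord0 i * (mu_weight ((2:RR)^-1 *: (y - e)) sg * sgnb (sg i))).
    rewrite exchange_big /=; apply: eq_bigr => i _.
    rewrite -mulr_sumr mw_mean !mxE; lra.
  apply: eq_bigr => sg _; rewrite mulr_sumr mulr_sumr; apply: eq_bigr => i _; lra.
apply: ler_sum => sg _; apply: ler_wpM2l.
  apply: mw_ge0 => i; rewrite !mxE; have := hy i; have := he i; move=> /andP[? ?] /andP[? ?]; apply/andP; split; lra.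
by rewrite ler_pM2l //; lra.
Qed.

Lemma cont_lin n (c : 'I_n -> RR) :
  continuous (fun xi : 'rV[RR]_n => \sum_i xi ord0 i * c i).
Proof.
have := (@continuous_big RR 'I_n +%R 0 (fun _ => true) (pseudometric_normed_Zmodule.add_continuous (V := RR^o)) _ (index_enum 'I_n)
   (fun i (xi : 'rV[RR]_n) => xi ord0 i * c i)).
apply => i _ x; apply: continuousM; first exact: coord_continuous.
exact: cst_continuous.
Qed.

Lemma cube_compact n : compact [set y : 'rV[RR]_n | in_cube y].
Proof.
have := @rV_compact RR n (fun _ => `[(-1:RR), 1]) (fun _ => @segment_compact _ _ _).
congr compact; apply/seteqP; split => y /= h i; have := h i;
  by rewrite /= in_itv /=.
Qed.

Lemma bound_step n (f : 'rV[RR]_n -> RR) (sg : {ffun 'I_n -> bool}) : C1 f ->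
  has_sup [set (\sum_i xi ord0 i * sgnb (sg i)) | xi in grad_image f].
Proof.
move=> [_ hg]; apply: compact_has_sup.
  exists (\sum_i gradient f 0 ord0 i * sgnb (sg i)); exists (gradient f 0) => //.
  by exists 0 => // i; rewrite mxE; lra.
rewrite /grad_image image_comp; apply: continuous_compact; last exact: cube_compact.
apply: continuous_subspaceT => x; apply: continuous_comp; first exact: hg.
exact: cont_lin.
Qed.

Lemma line_deriv n (f : 'rV[RR]_n -> RR^o) (x v : 'rV[RR]_n) (t : RR) :
  let h := fun s : RR => f (s *: v + x) in
  (derivable f (t *: v + x) v) ->
  derivable (h : RR^o -> RR^o) t 1 /\ derive (h : RR^o -> RR^o) t 1 = derive f (t *: v + x) v.
Proof.
move=> h.
have E : (fun k : RR => k^-1 *: (((h : RR^o -> RR^o) \o shift t) (k *: (1:RR^o)) - h t)) =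
         (fun k : RR => k^-1 *: ((f \o shift (t *: v + x)) (k *: v) - f (t *: v + x))).
  apply: funext => k /=; rewrite /h /=.
  by rewrite scalerDl [k *: (1:RR^o)]mulr1 addrA.
by rewrite /derivable /derive E.
Qed.

Lemma grad_lin n (f : 'rV[RR]_n -> RR) (z v : 'rV[RR]_n) :
  differentiable (f : 'rV[RR]_n -> RR^o) z ->
  derive (f : 'rV[RR]_n -> RR^o) z v = \sum_i gradient f z ord0 i * v ord0 i.
Proof.
move=> hd; rewrite deriveE // {1}(row_sum_delta v) linear_sum.
apply: eq_bigr => i _; rewrite linearZ /= /gradient mxE deriveE // mulrC.
by [].
Qed.

Lemma mvt_step n (f : 'rV[RR]_n -> RR) (x y : 'rV[RR]_n) : C1 f -> in_cube x -> in_cube y ->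
  exists2 xi, grad_image f xi & f y - f x = \sum_i xi ord0 i * (y ord0 i - x ord0 i).
Proof.
move=> [hdf _] hx hy.
pose v := y - x.
pose h := fun s : RR => (f : 'rV[RR]_n -> RR^o) (s *: v + x).
have hder t : derivable (h : RR^o -> RR^o) t 1 /\
    derive (h : RR^o -> RR^o) t 1 = derive (f : 'rV[RR]_n -> RR^o) (t *: v + x) v.
  by apply: line_deriv; apply: diff_derivable.
have hid t : is_derive (t : RR^o) (1 : RR^o) (h : RR^o -> RR^o)
    (derive (f : 'rV[RR]_n -> RR^o) (t *: v + x) v).
  have [d1 d2] := hder t; rewrite -d2; exact: derivableP.
have hcont : {within `[(0:RR), 1], continuous h}.
  by apply: derivable_within_continuous => t _; exact: (proj1 (hder t)).
have [c c01 hc] := @MVT_segment RR h (fun t => derive (f : 'rV[RR]_n -> RR^o) (t *: v + x) v) 0 1 ler01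
  (fun t _ => hid t) hcont.
move: hc; rewrite /h scale1r scale0r add0r subr0 mulr1 /v subrK => ->.
exists (gradient f (c *: (y - x) + x)).
  exists (c *: (y - x) + x) => //= i; rewrite !mxE.
  move: c01; rewrite in_itv /= => /andP[c0 c1].
  have := hx i; have := hy i; move=> /andP[? ?] /andP[? ?]; apply/andP; split; nra.
rewrite grad_lin //; apply: eq_bigr => i _; rewrite !mxE.
by [].
Qed.
Local Close Scope classical_set_scope.


Lemma sign_pt_cube n (s : {ffun 'I_n -> bool}) : in_cube (sign_pt s).
Proof. by move=> i; rewrite mxE /sgnb; case: (s i); apply/andP; split; lra. Qed.

Theorem lemma4p2 : exists kappa : RR, forall (n : nat) (f : 'rV[RR]_n -> RR),
  C1 f ->
  forall y : 'rV[RR]_n, in_cube y ->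
    f y - harm_ext f y <= kappa * bV (grad_image f).
Proof.
exists 2 => n f hf y hy.
pose M := fun sg : {ffun 'I_n -> bool} =>
  sup [set (\sum_i xi ord0 i * sgnb (sg i)) | xi in grad_image f]%classic.
have hM : forall xi, grad_image f xi -> forall sg : {ffun 'I_n -> bool}, \sum_i xi ord0 i * sgnb (sg i) <= M sg.
  by move=> xi hxi sg; have := sup_upper_bound (bound_step sg hf); apply; exists xi.
have key : forall s, f y - f (sign_pt s) <=
    \sum_(sg : {ffun 'I_n -> bool}) mu_weight ((2:RR)^-1 *: (y - sign_pt s)) sg * (2 * M sg).
  move=> s; have [xi hxi ->] := mvt_step hf (sign_pt_cube s) hy.
  apply: step_s; [move=> i; have := hy i; rewrite /= => h; exact: h | exact: sign_pt_cube | exact: hM].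
have -> : f y - harm_ext f y = \sum_s mu_weight y s * (f y - f (sign_pt s)).
  rewrite /harm_ext -{1}(mulr1 (f y)) -(mw_sum y) mulr_sumr -sumrB.
  by apply: eq_bigr => s _; rewrite mulrBr mulrC.
apply: le_trans (_ : \sum_s mu_weight y s * \sum_(sg : {ffun 'I_n -> bool})
   mu_weight ((2:RR)^-1 *: (y - sign_pt s)) sg * (2 * M sg) <= _).
  by apply: ler_sum => s _; apply: ler_wpM2l; [exact: mw_ge0 | exact: key].
rewrite /bV mulr_sumr.
under eq_bigr do rewrite mulr_sumr.
rewrite exchange_big /= [X in _ <= X]mulr_sumr le_eqVlt; apply/orP; left; apply/eqP; apply: eq_bigr => sg _.
rewrite (eq_bigr (fun s => (2 * M sg) * (mu_weight y s * mu_weight ((2:RR)^-1 *: (y - sign_pt s)) sg))); last first.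
  by move=> s _; rewrite mulrA mulrC.
by rewrite -mulr_sumr mw_mix /M; lra.
Qed.
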